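(* Let $\Omega\subset\mathbb R^d$, $d\in\{2,3\}$, be a bounded polyhedral Lipschitz domain, $V:=H^1_0(\Omega)$ with $\|v\|_V:=(\int_\Omega A_0\nabla v\cdot\nabla v\,dx)^{1/2}$ for a symmetric uniformly positive definite $A_0\in L^\infty$, and $V^*$ with the dual norm. Let $\mathcal U\subset V$ be open, $\mathcal F:V\to V^*$ Fréchet differentiable on $\mathcal U$, $\tilde u_h\in\mathcal U$, $\rho>0$ with $B_\rho:=\{w:\|w-\tilde u_h\|_V\le\rho\}\subset\mathcal U$, and $\mathcal L_w:=D\mathcal F(w)$. Assume: $\|\mathcal F(\tilde u_h)\|_{V^*}\le\mathfrak r$; the bilinear form $B_{\tilde u_h}(\delta u,v):=\langle\mathcal L_{\tilde u_h}\delta u,v\rangle$ is symmetric and satisfies $B_{\tilde u_h}(v,v)\ge\alpha\|v\|_V^2$ for all $v\in V$ with $\alpha>0$; $\|\mathcal L_w-\mathcal L_z\|_{\mathcal L(V,V^* )}\le L(\rho)\|w-z\|_V$ for all $w,z\in B_\rho$; and $u\in B_\rho$ satisfies $\mathcal F(u)=0$. Let $\mathcal J$ be a real functional, Fréchet differentiable on $\mathcal U$, with $\|D\mathcal J(w)-D\mathcal J(z)\|_{\mathcal L(V,\mathbb R)}\le M_{\mathcal J}(\rho)\|w-z\|_V$ for all $w,z\in B_\rho$, where $M_{\mathcal J}(\rho)\ge0$. Set $j_{\tilde u_h}:=D\mathcal J(\tilde u_h)\in V^*$, let $z_h\in V$ be arbitrary, and define $\mathcal G(z_h)\in V^*$ by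 $\langle\mathcal G(z_h),v\rangle:=j_{\tilde u_h}(v)-B_{\tilde u_h}(v,z_h)$. Then $\mathcal J(u)\in[\mathcal J(\tilde u_h)-E_{\mathcal J}(\rho;z_h),\ \mathcal J(\tilde u_h)+E_{\mathcal J}(\rho;z_h)]$, where $$E_{\mathcal J}(\rho;z_h):=|\langle\mathcal F(\tilde u_h),z_h\rangle|+\tfrac12L(\rho)\rho^2\|z_h\|_V+\bigl(\mathfrak r+\tfrac12L(\rho)\rho^2\bigr)\alpha^{-1}\|\mathcal G(z_h)\|_{V^*}+\tfrac12M_{\mathcal J}(\rho)\rho^2.$$
   Context: $\|\cdot\|_{\mathcal L(V,V^* )}$ is the operator norm and $\|\cdot\|_{\mathcal L(V,\mathbb R)}=\|\cdot\|_{V^*}$ the dual norm. In the paper $u$ is the solution whose existence and local uniqueness in $B_\rho$ was certified by a Newton–Kantorovich argument. *)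

(* Defs.v *)
From HB Require Import structures.
From mathcomp Require Import all_boot all_order all_algebra.
From mathcomp Require Import all_classical all_reals all_analysis.
Set Implicit Arguments. Unset Strict Implicit. Unset Printing Implicit Defensive.
Import Order.TTheory GRing.Theory Num.Theory.
Import numFieldNormedType.Exports.
Local Open Scope classical_set_scope.
Local Open Scope ring_scope.

Definition is_dual (R : realType) (V : normedModType R) (f : V -> R) : Prop :=
  (forall (a : R) (x y : V), f (a *: x + y) = a * f x + f y) /\
  exists C : R, forall v : V, `|f v| <= C * `|v|.

Definition dual_norm (R : realType) (V : normedModType R) (f : V -> R) : R :=
  sup [set `|f v| | v in [set v : V | `|v| <= 1]].

(* A bounded linear operator V -> Vdual, represented by the bilinear map
   (d, v) |-> <L d, v>. *)
Definition is_op (R : realType) (V : normedModType R) (L : V -> V -> R) : Prop :=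
  (forall d, is_dual (L d)) /\
  (forall (a : R) (x y : V) (v : V), L (a *: x + y) v = a * L x v + L y v) /\
  exists C : R, forall d : V, dual_norm (L d) <= C * `|d|.

Definition op_norm (R : realType) (V : normedModType R) (L : V -> V -> R) : R :=
  sup [set dual_norm (L d) | d in [set d : V | `|d| <= 1]].

Definition frechet_dual_at (R : realType) (V : normedModType R)
    (F : V -> V -> R) (w : V) (DFw : V -> V -> R) : Prop :=
  is_op DFw /\
  forall eps : R, 0 < eps -> exists2 del : R, 0 < del &
    forall h : V, `|h| < del ->
      dual_norm (fun v => F (w + h) v - F w v - DFw h v) <= eps * `|h|.

(* Main.v *)
Require Import Defs.
From HB Require Import structures.
From mathcomp Require Import all_boot all_order all_algebra.
From mathcomp Require Import all_classical all_reals all_analysis.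
From mathcomp Require Import ring lra.
Import Order.TTheory GRing.Theory Num.Theory.
Import numFieldNormedType.Exports.
Local Open Scope classical_set_scope.
Local Open Scope ring_scope.

Section S.
Context (R : realType).

Lemma is_derive_eps (g : R -> R) t D :
  (forall eps, 0 < eps -> exists2 del, 0 < del & forall h, `|h| < del ->
     `|g (t + h) - g t - h * D| <= eps * `|h|) -> is_derive t 1 g D.
Proof.
move=> H.
have cv : (fun h : R => h^-1 *: ((g \o shift t) (h *: 1) - g t)) @ 0^' --> D.
  apply/cvgrPdist_le => eps eps0.
  have [del del0 Hd] := H eps eps0.
  rewrite near_withinE /=.
  apply/nbhs_normP; exists del => //= h /=; rewrite sub0r normrN => hd hN0.
  have := Hd h hd.
  rewrite /shift /= [h *: 1]mulr1 [h + t]addrC.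
  have hp : 0 < `|h| by rewrite normr_gt0.
  move=> Hh.
  have -> : D - h^-1 *: (g (t + h) - g t) = - h^-1 * (g (t + h) - g t - h * D).
    rewrite -[h^-1 *: _]/(h^-1 * _). field. exact: hN0.
  by rewrite normrM normrN normfV ler_pdivrMl // [`|h| * eps]mulrC.
apply: DeriveDef; first by apply/cvg_ex; exists D.
by apply: cvg_lim.
Qed.

Lemma is_derive_sq (K t : R) : is_derive t 1 (fun x : R => K / 2 * (x * x)) (K * t).
Proof.
apply: is_derive_eps => eps eps0.
have K1 : 0 < `|K| + 1 by rewrite ltr_wpDl.
exists (eps / (`|K| + 1)); first by rewrite divr_gt0.
move=> h hd.
have -> : K / 2 * ((t + h) * (t + h)) - K / 2 * (t * t) - h * (K * t) = (K / 2 * h) * h.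
  by field.
rewrite normrM ler_wpM2r //.
rewrite ltr_pdivlMr // in hd.
have -> : `|K / 2 * h| = `|K| * `|h| / 2.
  by rewrite !normrM normfV (ger0_norm (_ : (0:R) <= 2)) // mulrAC.
have hK : `|K| * `|h| <= `|h| * (`|K| + 1) by rewrite mulrDr mulr1 mulrC lerDl.
have : `|K| * `|h| <= eps by apply: le_trans hK (ltW hd).
lra.
Qed.

Lemma mvt_half (g gd : R -> R) (K : R) :
  (forall t : R, 0 <= t <= 1 -> is_derive t 1 g (gd t)) ->
  (forall t : R, 0 <= t <= 1 -> `|gd t| <= K * t) -> `|g 1 - g 0| <= K / 2.
Proof.
move=> Hd Hb.
have key : forall s : R, (s = 1 \/ s = -1) -> s * (g 1 - g 0) <= K / 2.
  move=> s hs.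
  pose f := fun x : R => s * g x - K / 2 * (x * x).
  have df : forall x : R, 0 <= x <= 1 -> is_derive x 1 f (s * gd x - K * x).
    move=> x hx; rewrite /f.
    have h1 := Hd x hx.
    have h2 := is_derive_sq K x.
    have h3 : is_derive x 1 (s \*: g) (s *: gd x) by apply: is_deriveZ.
    have h4 := is_deriveB h3 h2.
    exact: h4.
  have [c hc E] : exists2 c, c \in `]0, 1[ & f 1 - f 0 = (s * gd c - K * c) * (1 - 0).
    apply: MVT; first by [].
      move=> x; rewrite in_itv /= => /andP[x0 x1]; by apply: df; rewrite !ltW.
    apply: (derivable_within_continuous (i := `[0, 1]))  => x; rewrite in_itv /= => hx.
    by have := df x hx; case.
  move: hc; rewrite in_itv /= => /andP[c0 c1].
  have hb : `|gd c| <= K * c by apply: Hb; rewrite !ltW.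
  have : s * gd c <= K * c.
    case: hs => ->; rewrite ?mul1r ?mulN1r; apply: le_trans hb.
      exact: ler_norm. by rewrite -normrN ler_norm.
  move: E; rewrite /f subr0 mulr1 !mulr0 mulr1 => E H.
  have : s * g 1 - s * g 0 - K / 2 <= 0 by lra.
  rewrite mulrBr; lra.
have := key 1 (or_introl erefl); have := key (-1) (or_intror erefl).
rewrite mul1r mulN1r => H1 H2.
by rewrite ler_norml H2 andbT lerNl.
Qed.
End S.
Section D.
Context (R : realType) (V : normedModType R).
Implicit Types (f g : V -> R).

Lemma dual0 {f} : is_dual f -> f 0 = 0.
Proof.
case=> lin _; have := lin 1 0 0; rewrite scale1r addr0 mul1r => h.
by apply: (addrI (f 0)); rewrite addr0 -h.
Qed.

Lemma dualZ {f} a x : is_dual f -> f (a *: x) = a * f x.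
Proof. move=> hf; have := (proj1 hf) a x 0; rewrite addr0 (dual0 hf) addr0 //. Qed.

Lemma dualD {f} x y : is_dual f -> f (x + y) = f x + f y.
Proof. move=> hf; have := (proj1 hf) 1 x y; rewrite scale1r mul1r //. Qed.

Lemma dual_ge0 f : 0 <= dual_norm f.
Proof.
rewrite /dual_norm.
set S := [set `|f v| | v in [set v : V | `|v| <= 1]].
have [hub|nub] := pselect (has_ubound S).
  apply: le_trans (normr_ge0 (f 0)) _.
  by apply: (ub_le_sup hub); exists 0; rewrite //= normr0.
rewrite sup_out //; by case.
Qed.

Lemma dual_ub f : is_dual f -> has_ubound [set `|f v| | v in [set v : V | `|v| <= 1]].
Proof.
case=> _ [C hC]; exists `|C| => _ [w /= hw <-].
apply: le_trans (hC w) _.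
apply: le_trans (ler_wpM2r (normr_ge0 w) (ler_norm C)) _.
by rewrite -[X in _ <= X]mulr1 ler_wpM2l.
Qed.

Lemma dual_le {f v} : is_dual f -> `|f v| <= dual_norm f * `|v|.
Proof.
move=> hf.
have [->|v0] := eqVneq v 0; first by rewrite (dual0 hf) !normr0 mulr0.
have nv : 0 < `|v| by rewrite normr_gt0.
pose s := `|v|^-1 *: v.
have hs : `|s| <= 1 by rewrite /s normrZ normfV normr_id mulVf ?normr_eq0.
have fs : `|f s| <= dual_norm f by rewrite /dual_norm; apply: (ub_le_sup (dual_ub _ hf)); exists s.
have fv : f v = `|v| * f s by rewrite /s (dualZ _ _ hf) mulrA mulfV ?normr_eq0 // mul1r.
by rewrite fv normrM normr_id mulrC ler_wpM2r.
Qed.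

Lemma dual_norm_le f C : (forall v, `|v| <= 1 -> `|f v| <= C) -> dual_norm f <= C.
Proof.
move=> H; apply: ge_sup.
  by exists `|f 0|, 0 => //=; rewrite normr0.
by move=> _ [w /= hw <-]; apply: H.
Qed.

Lemma dual_sub f g : is_dual f -> is_dual g -> is_dual (fun v => f v - g v).
Proof.
move=> [lf [Cf hf]] [lg [Cg hg]]; split.
  by move=> a x y; rewrite lf lg; ring.
exists (Cf + Cg) => v; rewrite mulrDl.
by apply: le_trans (ler_normB _ _) _; apply: lerD.
Qed.

Lemma op_sub (A B : V -> V -> R) : is_op A -> is_op B -> is_op (fun d v => A d v - B d v).
Proof.
move=> [dA [lA [CA hA]]] [dB [lB [CB hB]]]; split; first by move=> d; apply: dual_sub.
split; first by move=> a x y v; rewrite lA lB; ring.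
exists (CA + CB) => d; apply: dual_norm_le => v hv.
apply: le_trans (ler_normB _ _) _; rewrite mulrDl; apply: lerD.
  apply: le_trans (dual_le (dA d)) _; apply: le_trans (hA d).
  by rewrite -[X in _ <= X]mulr1 ler_wpM2l // dual_ge0.
apply: le_trans (dual_le (dB d)) _; apply: le_trans (hB d).
by rewrite -[X in _ <= X]mulr1 ler_wpM2l // dual_ge0.
Qed.

Lemma op_le (L : V -> V -> R) : is_op L -> forall d v, `|L d v| <= op_norm L * `|d| * `|v|.
Proof.
move=> [dL [lL [C hC]]] d v.
have L0 : forall v, L 0 v = 0.
  move=> w; have := lL 1 0 0 w; rewrite scale1r addr0 mul1r => h.
  by apply: (addrI (L 0 w)); rewrite addr0 -h.
have LZ : forall a x w, L (a *: x) w = a * L x w.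
  by move=> a x w; have := lL a x 0 w; rewrite addr0 L0 addr0.
have [->|d0] := eqVneq d 0; first by rewrite L0 !normr0 mulr0 mul0r.
pose s := `|d|^-1 *: d.
have hs : `|s| <= 1 by rewrite /s normrZ normfV normr_id mulVf ?normr_eq0.
have hub : has_ubound [set dual_norm (L d) | d in [set d : V | `|d| <= 1]].
  exists `|C| => _ [w /= hw <-]; apply: le_trans (hC w) _.
  apply: le_trans (ler_wpM2r (normr_ge0 w) (ler_norm C)) _.
  by rewrite -[X in _ <= X]mulr1 ler_wpM2l.
have fs : dual_norm (L s) <= op_norm L by rewrite /op_norm; apply: (ub_le_sup hub); exists s.
have fv : L d v = `|d| * L s v by rewrite /s LZ mulrA mulfV ?normr_eq0 // mul1r.
rewrite fv normrM normr_id [op_norm L * _]mulrC -mulrA ler_wpM2l //.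
by apply: le_trans (dual_le (dL s)) _; rewrite ler_wpM2r.
Qed.


Lemma op0 (L : V -> V -> R) v : is_op L -> L 0 v = 0.
Proof.
move=> [_ [lL _]]; have := lL 1 0 0 v; rewrite scale1r addr0 mul1r => h.
by apply: (addrI (L 0 v)); rewrite addr0 -h.
Qed.

Lemma opZ (L : V -> V -> R) a x v : is_op L -> L (a *: x) v = a * L x v.
Proof.
move=> hL; have := (proj1 (proj2 hL)) a x 0 v; by rewrite addr0 op0 // addr0.
Qed.

Lemma op_ge0 (L : V -> V -> R) : 0 <= op_norm L.
Proof.
rewrite /op_norm.
set S := [set dual_norm (L d) | d in [set d : V | `|d| <= 1]].
have [hub|nub] := pselect (has_ubound S).
  apply: le_trans (dual_ge0 (L 0)) _.
  by apply: (ub_le_sup hub); exists 0; rewrite //= normr0.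
rewrite sup_out //; by case.
Qed.

Lemma dual_d (J : V -> R) x : differentiable J x -> is_dual ('d J x).
Proof.
move=> dJ; split; first by move=> a y z; rewrite linearP.
have := diff_continuous dJ.
move/linear_bounded_continuous/linear_boundedP.
case=> M [MR HM]; exists (M + 1) => v; apply: HM.
by rewrite ltrDl.
Qed.

Lemma is_derive_lin (c t : R) : is_derive t 1 (fun s : R => s * c) c.
Proof.
apply: is_derive_eps => eps eps0; exists 1 => // h _.
have -> : (t + h) * c - t * c - h * c = 0 by ring.
by rewrite normr0 mulr_ge0 // ltW.
Qed.
End D.
Arguments dual0 {R V f}. Arguments dualZ {R V f}. Arguments dualD {R V f}.
Arguments dual_ub {R V f}. Arguments dual_le {R V f v}. Arguments dual_norm_le {R V f C}.
Arguments dual_sub {R V f g}. Arguments op_sub {R V A B}. Arguments op_le {R V L}.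
Arguments op0 {R V L}. Arguments opZ {R V L}. Arguments dual_d {R V J x}.
Arguments dual_ge0 {R V}. Arguments op_ge0 {R V}.



Theorem theorem8p3 (R : realType) (V : normedModType R)
  (U : set V) (F : V -> V -> R) (DF : V -> V -> V -> R) (J : V -> R)
  (ut u zh : V) (rho rr alpha Lrho MJ : R) :
  open U ->
  (forall w : V, is_dual (F w)) ->
  (forall w : V, U w -> frechet_dual_at F w (DF w)) ->
  U ut ->
  0 < rho ->
  [set w : V | `|w - ut| <= rho] `<=` U ->
  dual_norm (F ut) <= rr ->
  (forall d v : V, DF ut d v = DF ut v d) ->
  0 < alpha ->
  (forall v : V, alpha * `|v| ^+ 2 <= DF ut v v) ->
  (forall w z : V, `|w - ut| <= rho -> `|z - ut| <= rho ->
     op_norm (fun d v => DF w d v - DF z d v) <= Lrho * `|w - z|) ->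
  `|u - ut| <= rho ->
  (forall v : V, F u v = 0) ->
  (forall w : V, U w -> differentiable J w) ->
  0 <= MJ ->
  (forall w z : V, `|w - ut| <= rho -> `|z - ut| <= rho ->
     dual_norm (fun v => 'd J w v - 'd J z v) <= MJ * `|w - z|) ->
  let G := fun v : V => 'd J ut v - DF ut v zh in
  let E := `|F ut zh| + 2^-1 * Lrho * rho ^+ 2 * `|zh|
           + (rr + 2^-1 * Lrho * rho ^+ 2) * alpha^-1 * dual_norm G
           + 2^-1 * MJ * rho ^+ 2 in
  J u \in `[J ut - E, J ut + E].
Proof.
move=> Uo Fd Fr Uut rho0 ballU hrr Bsym alpha0 coer Lip urho Fu0 Jd MJ0 JLip.
rewrite /is_true; cbv zeta.
set G := fun v : V => 'd J ut v - DF ut v zh.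
set e := u - ut.
have hw : forall t : R, 0 <= t <= 1 -> `|(ut + t *: e) - ut| <= rho.
  move=> t /andP[t0 t1]; rewrite addrAC subrr add0r normrZ ger0_norm //.
  apply: le_trans urho; rewrite -[X in _ <= X]mul1r ler_wpM2r //.
have wn : forall t : R, 0 <= t <= 1 -> `|(ut + t *: e) - ut| = t * `|e|.
  move=> t /andP[t0 t1]; by rewrite addrAC subrr add0r normrZ ger0_norm.
have Uw : forall t : R, 0 <= t <= 1 -> U (ut + t *: e) by move=> t ht; apply: ballU; exact: hw.
have w1 : ut + 1 *: e = u by rewrite scale1r /e addrCA subrr addr0.
have w0 : ut + 0 *: e = ut by rewrite scale0r addr0.
have opDF : forall x, U x -> is_op (DF x) by move=> x /Fr [].
have ut_in : `|ut - ut| <= rho by rewrite subrr normr0 ltW.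
have TA : forall v, `|F u v - F ut v - DF ut e v| <= Lrho * `|e| ^+ 2 * `|v| / 2.
  move=> v.
  pose c := DF ut e v.
  have := @mvt_half R (fun t => F (ut + t *: e) v - t * c)
    (fun t => DF (ut + t *: e) e v - c) (Lrho * `|e| ^+ 2 * `|v|).
  rewrite /= w1 w0 mul0r mul1r subr0 => H.
  have -> : F u v - F ut v - DF ut e v = F u v - c - F ut v by rewrite /c; ring.
  apply: H.
    move=> t ht; apply: is_derive_eps => eps eps0.
    have [hop hfr] := Fr _ (Uw t ht).
    set x := ut + t *: e.
    pose k := `|e| * `|v| + 1.
    have k0 : 0 < k by rewrite /k ltr_wpDl // mulr_ge0.
    have [del del0 Hdel] := hfr (eps / k) (divr_gt0 eps0 k0).
    exists (del / (`|e| + 1)); first by rewrite divr_gt0 // ltr_wpDl.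
    move=> h hh.
    have hhe : `|h *: e| < del.
      rewrite ltr_pdivlMr ?ltr_wpDl // in hh.
      rewrite normrZ; apply: le_lt_trans hh.
      by rewrite ler_wpM2l // lerDl.
    have Rd := Hdel _ hhe.
    have hd : is_dual (fun v => F (x + h *: e) v - F x v - DF x (h *: e) v).
      exact: (@dual_sub R V (fun v => F (x + h *: e) v - F x v) (DF x (h *: e))
        (dual_sub (Fd _) (Fd _)) ((proj1 hop) _)).
    have -> : F (ut + (t + h) *: e) v - (t + h) * c - (F x v - t * c) - h * (DF x e v - c)
        = F (x + h *: e) v - F x v - DF x (h *: e) v.
      rewrite (opZ _ _ _ hop) /x scalerDl addrA; ring.
    apply: le_trans (dual_le hd) _.
    apply: le_trans (ler_wpM2r (normr_ge0 v) Rd) _.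
    rewrite normrZ.
    have : `|e| * `|v| <= k by rewrite /k lerDl.
    move=> hk.
    have -> : eps / k * (`|h| * `|e|) * `|v| = eps * `|h| * ((`|e| * `|v|) / k).
      by rewrite /k; field; rewrite gt_eqF.
    rewrite -[X in _ <= X]mulr1; apply: ler_wpM2l; first by rewrite mulr_ge0 // ltW.
    by rewrite ler_pdivrMr // mul1r.
  move=> t ht.
  have hop := op_sub (opDF _ (Uw t ht)) (opDF _ Uut).
  apply: le_trans (op_le hop e v) _.
  have hL := Lip _ _ (hw t ht) ut_in.
  rewrite wn // in hL.
  apply: le_trans (ler_wpM2r (normr_ge0 v) (ler_wpM2r (normr_ge0 e) hL)) _.
  by rewrite le_eqVlt; apply/orP; left; apply/eqP; ring.
have TB : `|J u - J ut - 'd J ut e| <= MJ * `|e| ^+ 2 / 2.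
  pose c := 'd J ut e.
  have := @mvt_half R (fun t => J (ut + t *: e) - t * c)
    (fun t => 'd J (ut + t *: e) e - c) (MJ * `|e| ^+ 2).
  rewrite /= w1 w0 mul0r mul1r subr0 => H.
  have -> : J u - J ut - 'd J ut e = J u - c - J ut by rewrite /c; ring.
  apply: H.
    move=> t ht.
    have dJ := Jd _ (Uw t ht).
    set x := ut + t *: e.
    have E1 : (fun h : R => h^-1 *: (((fun s => J (ut + s *: e)) \o shift t) (h *: 1)
                 - J (ut + t *: e)))
            = (fun h => h^-1 *: ((J \o shift x) (h *: e) - J x)).
      apply: funext => h /=; rewrite /x [h *: 1]mulr1 scalerDl addrCA //.
    have de : derivable J x e by apply: diff_derivable.
    have hd : is_derive t 1 (fun s => J (ut + s *: e)) ('d J x e).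
      apply: DeriveDef; first by rewrite /derivable E1; exact: de.
      by rewrite /derive E1; exact: (deriveE e dJ).
    exact: (is_deriveB hd (is_derive_lin _ c t)).
  move=> t ht.
  have hd : is_dual (fun v => 'd J (ut + t *: e) v - 'd J ut v).
    exact: (dual_sub (dual_d (Jd _ (Uw t ht))) (dual_d (Jd _ Uut))).
  apply: le_trans (dual_le (v := e) hd) _.
  have hL := JLip _ _ (hw t ht) ut_in.
  rewrite wn // in hL.
  apply: le_trans (ler_wpM2r (normr_ge0 e) hL) _.
  by rewrite le_eqVlt; apply/orP; left; apply/eqP; ring.
have Lcase : 0 <= Lrho \/ (forall x : V, x = 0).
  have [[x x0]|nx] := pselect (exists x : V, x != 0); last first.
    right => x; apply/eqP/negPn/negP => hx; apply: nx; by exists x.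
  left.
  have nx0 : 0 < `|x| by rewrite normr_gt0.
  pose w := ut + (rho / `|x|) *: x.
  have hwn : `|w - ut| = rho.
    rewrite /w addrAC subrr add0r normrZ ger0_norm ?divfK ?gt_eqF //.
    by rewrite divr_ge0 // ltW.
  have hw' : `|w - ut| <= rho by rewrite hwn.
  have := Lip w ut hw' ut_in.
  rewrite hwn => hl.
  have := le_trans (op_ge0 _) hl.
  by rewrite pmulr_lge0.
have DFlin : forall a x y, DF ut (a *: x + y) zh = a * DF ut x zh + DF ut y zh.
  by move=> a x y; rewrite (proj1 (proj2 (opDF _ Uut))).
have hG : is_dual G.
  apply: (@dual_sub R V ('d J ut) (fun v => DF ut v zh) (dual_d (Jd _ Uut))).
  split; first exact: DFlin.
  have [C hC] := proj2 (proj2 (opDF _ Uut)).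
  exists (C * `|zh|) => v.
  apply: le_trans (dual_le (proj1 (opDF _ Uut) v)) _.
  rewrite mulrAC; apply: ler_wpM2r => //; exact: (hC v).
case: Lcase => [Lpos|triv]; last first.
  have u0 : u = ut by rewrite (triv u) (triv ut).
  have zh0 : zh = 0 := triv zh.
  have G0 : dual_norm G = 0.
    apply/eqP; rewrite eq_le dual_ge0 andbT.
    apply: dual_norm_le => v _.
    by rewrite (triv v) /G zh0 linear0 (op0 _ (opDF _ Uut)) subr0 normr0.
  rewrite u0 G0 zh0 normr0 in_itv /= -ler_distl subrr normr0 !mulr0 addr0.
  have r2 : 0 <= rho ^+ 2 := sqr_ge0 rho.
  have m2 : 0 <= MJ * rho ^+ 2 by apply: mulr_ge0.
  have f2 : 0 <= `|F ut 0| := normr_ge0 _.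
  lra.
set q := 2^-1 * Lrho * rho ^+ 2.
have e2 : `|e| ^+ 2 <= rho ^+ 2.
  by rewrite !expr2; apply: ler_pM.
have RF : forall v, `|DF ut e v + F ut v| <= q * `|v|.
  move=> v; have := TA v; rewrite Fu0 => h.
  have -> : DF ut e v + F ut v = - (0 - F ut v - DF ut e v) by ring.
  rewrite normrN; apply: le_trans h _.
  have h2 : Lrho * `|e| ^+ 2 * `|v| <= Lrho * rho ^+ 2 * `|v|.
    by apply: ler_wpM2r => //; apply: ler_wpM2l.
  rewrite /q; lra.
have Fb : forall v, `|F ut v| <= rr * `|v|.
  by move=> v; apply: le_trans (dual_le (Fd ut)) (ler_wpM2r (normr_ge0 _) hrr).
have q0 : 0 <= q.
  rewrite /q; apply: mulr_ge0; last exact: sqr_ge0.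
  by apply: mulr_ge0; rewrite // invr_ge0 ler0n.
have rr0 : 0 <= rr := le_trans (dual_ge0 _) hrr.
have ebound : `|e| <= (rr + q) / alpha.
  have c1 := coer e.
  have a1 := RF e.
  have a2 := Fb e.
  have a3 := ler_norm (DF ut e e + F ut e).
  have a4 : - F ut e <= `|F ut e| by rewrite -normrN ler_norm.
  have h1 : alpha * `|e| ^+ 2 <= (rr + q) * `|e| by lra.
  rewrite ler_pdivlMr //.
  have [e0|epos] := eqVneq `|e| 0.
    by rewrite e0 mul0r addr_ge0.
  have ep : 0 < `|e| by rewrite lt_def epos normr_ge0.
  rewrite -(ler_pM2r ep); move: h1; rewrite expr2; lra.
have Gb : `|G e| <= (rr + q) * alpha^-1 * dual_norm G.
  apply: le_trans (dual_le hG) _; rewrite [dual_norm G * _]mulrC.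
  by apply: ler_wpM2r; [exact: dual_ge0 | exact: ebound].
have Db : `|DF ut e zh| <= `|F ut zh| + q * `|zh|.
  have h := RF zh.
  have h2 := ler_normB (DF ut e zh + F ut zh) (F ut zh).
  have h3 : DF ut e zh + F ut zh - F ut zh = DF ut e zh by ring.
  rewrite h3 in h2; lra.
have Jb : `|J u - J ut - 'd J ut e| <= 2^-1 * MJ * rho ^+ 2.
  apply: le_trans TB _.
  have : MJ * `|e| ^+ 2 <= MJ * rho ^+ 2 by apply: ler_wpM2l.
  lra.
rewrite in_itv /= -ler_distl.
have -> : J u - J ut = (J u - J ut - 'd J ut e) + G e + DF ut e zh by rewrite /G; ring.
apply: le_trans (ler_normD _ _) _.
apply: le_trans (lerD (ler_normD _ _) (lexx _)) _.
lra.
Qed.
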